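(* Let $s=\tfrac12$, $\lambda\in\mathbb{C}$ and $k\in\mathbb{Z}\setminus\{0\}$. Every even superderivation of $\mathfrak{L}^{1/2}_\lambda$ of degree $k$ is inner; more precisely, it equals $\mathrm{ad}(aL_k+bI_k)$ for some $a,b\in\mathbb{C}$.
   Context: For $s\in\{0,\tfrac12\}$ and $\lambda\in\mathbb{C}$, $\mathfrak{L}^s_\lambda$ is the complex Lie superalgebra with basis $\{L_m,I_m,G_p,H_p : m\in\mathbb{Z},\ p\in s+\mathbb{Z}\}$, even part spanned by the $L_m,I_m$, odd part spanned by the $G_p,H_p$, and brackets $[L_m,L_n]=(m-n)L_{m+n}$, $[L_m,I_n]=(m-n)I_{m+n}$, $[L_m,H_p]=(\tfrac m2-p)H_{m+p}$, $[L_m,G_p]=(\tfrac m2-p)G_{m+p}+\lambda(m+1)H_{m+p}$, $[I_m,G_p]=(m-2p)H_{m+p}$, $[G_p,G_q]=I_{p+q}$, plus those given by super-antisymmetry $[y,x]=-(-1)^{|x||y|}[x,y]$; all other brackets of basis elements are zero. $\mathfrak{L}_r$ ($r\in\tfrac12\mathbb{Z}$) is spanned by basis elements of index $r$. A superderivation of parity $a$ is a linear map $D$ shifting parity by $a$ with $D([x,y])=[D(x),y]+(-1)^{a|x|}[x,D(y)]$ for homogeneous $x,y$; it has degree $r$ if $D(\mathfrak{L}_q)\subset\mathfrak{L}_{q+r}$. $\mathrm{ad}\,x(y)=[x,y]$. *)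

(* Defs.v *)
From HB Require Import structures.
From mathcomp Require Import all_boot all_order all_algebra.
Set Implicit Arguments. Unset Strict Implicit. Unset Printing Implicit Defensive.
Import Order.TTheory GRing.Theory Num.Theory.
Local Open Scope ring_scope.

(* Basis of L^{1/2}_lambda:  BL m = L_m, BI m = I_m (m : int),
   BG r = G_{r+1/2}, BH r = H_{r+1/2} (r : int). *)
Inductive basis := BL of int | BI of int | BG of int | BH of int.

Definition basis_eqb (x y : basis) : bool :=
  match x, y with
  | BL m, BL n | BI m, BI n | BG m, BG n | BH m, BH n => m == n
  | _, _ => false
  end.

Lemma basis_eqP : Equality.axiom basis_eqb.
Proof.
by case=> m [] n /=; (try by constructor); apply: (iffP eqP) => [->|[]].
Qed.

HB.instance Definition _ := hasDecEq.Build basis basis_eqP.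

Definition parity (b : basis) : bool :=
  match b with BL _ | BI _ => false | BG _ | BH _ => true end.

(* Twice the index (so that it is an integer). *)
Definition idx2 (b : basis) : int :=
  match b with
  | BL m | BI m => 2 * m
  | BG r | BH r => 2 * r + 1
  end.

Definition elt (R : Type) := seq (basis * R).

Definition coef (R : nmodType) (x : elt R) (c : basis) : R :=
  \sum_(t <- x | t.1 == c) t.2.

Definition scale (R : pzRingType) (a : R) (x : elt R) : elt R :=
  [seq (t.1, a * t.2) | t <- x].

Definition ext (R : pzRingType) (f : basis -> elt R) (x : elt R) : elt R :=
  flatten [seq scale t.2 (f t.1) | t <- x].

Definition half (R : fieldType) (z : int) : R := z%:~R / 2%:R.

Definition br (R : fieldType) (lam : R) (b1 b2 : basis) : elt R :=
  match b1, b2 with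
  | BL m, BL n => [:: (BL (m + n), (m - n)%:~R)]
  | BL m, BI n => [:: (BI (m + n), (m - n)%:~R)]
  | BI m, BL n => [:: (BI (m + n), - (n - m)%:~R)]
  | BL m, BH r => [:: (BH (m + r), half R (m - 2 * r - 1))]
  | BH r, BL m => [:: (BH (m + r), - half R (m - 2 * r - 1))]
  | BL m, BG r => [:: (BG (m + r), half R (m - 2 * r - 1));
                      (BH (m + r), lam * (m + 1)%:~R)]
  | BG r, BL m => [:: (BG (m + r), - half R (m - 2 * r - 1));
                      (BH (m + r), - (lam * (m + 1)%:~R))]
  | BI m, BG r => [:: (BH (m + r), (m - 2 * r - 1)%:~R)]
  | BG r, BI m => [:: (BH (m + r), - (m - 2 * r - 1)%:~R)]
  | BG r, BG q => [:: (BI (r + q + 1), 1)]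
  | _, _ => [::]
  end.

Definition brE (R : fieldType) (lam : R) (x y : elt R) : elt R :=
  flatten [seq scale (t.2 * u.2) (br lam t.1 u.1) | t <- x, u <- y].

Definition bas (R : pzRingType) (b : basis) : elt R := [:: (b, 1)].

Definition even_superder_deg (R : fieldType) (lam : R) (k : int)
    (d : basis -> elt R) : Prop :=
  [/\ (forall b c, coef (d b) c != 0 -> parity c = parity b),
      (forall b c, coef (d b) c != 0 -> idx2 c = idx2 b + 2 * k) &
      (forall b1 b2, coef (ext d (br lam b1 b2)) =1
         coef (brE lam (d b1) (bas R b2) ++ brE lam (bas R b1) (d b2)))].

(* Main.v *)
Require Import Defs.
From HB Require Import structures.
From mathcomp Require Import all_boot all_order all_algebra.
From mathcomp Require Import ring lra zify.
Import Order.TTheory GRing.Theory Num.Theory.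
Local Open Scope ring_scope.

Section Aux.
Variable R : fieldType.
Implicit Types (l : elt R) (c : basis).

Lemma kc_nil c : coef ([::] : elt R) c = 0.
Proof. by rewrite /coef big_nil. Qed.

Lemma kc_cons b r l c : coef ((b, r) :: l) c = (if b == c then r else 0) + coef l c.
Proof. by rewrite /coef big_cons /=; case: ifP; rewrite ?add0r. Qed.

Lemma kc_cat l1 l2 c : coef (l1 ++ l2) c = coef l1 c + coef l2 c.
Proof. by rewrite /coef big_cat. Qed.

Lemma kc_scale a l c : coef (scale a l) c = a * coef l c.
Proof. by rewrite /coef /scale big_map mulr_sumr. Qed.

Lemma kc_flatten (L : seq (elt R)) c : coef (flatten L) c = \sum_(l <- L) coef l c.
Proof.
elim: L => [|l L IH]; first by rewrite big_nil kc_nil.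
by rewrite /= kc_cat IH big_cons.
Qed.

Lemma kc_ext f l c : coef (ext f l) c = \sum_(t <- l) t.2 * coef (f t.1) c.
Proof.
rewrite /ext kc_flatten big_map; apply: eq_bigr => t _; exact: kc_scale.
Qed.

Lemma kc_brE lam l1 l2 c : coef (brE lam l1 l2) c =
  \sum_(t <- l1) \sum_(u <- l2) t.2 * u.2 * coef (br lam t.1 u.1) c.
Proof.
elim: l1 => [|t l1 IH]; first by rewrite big_nil /brE /= kc_nil.
rewrite big_cons -IH /brE /= flatten_cat kc_cat; congr (_ + _).
rewrite kc_flatten big_map; apply: eq_bigr => u _; exact: kc_scale.
Qed.

Lemma kc_brE_bas_r lam l x c :
  coef (brE lam l (bas R x)) c = \sum_(t <- l) t.2 * coef (br lam t.1 x) c.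
Proof.
rewrite kc_brE; apply: eq_bigr => t _.
by rewrite /bas big_cons big_nil addr0 mulr1.
Qed.

Lemma kc_brE_bas_l lam l x c :
  coef (brE lam (bas R x) l) c = \sum_(u <- l) u.2 * coef (br lam x u.1) c.
Proof.
rewrite kc_brE /bas big_cons big_nil addr0; apply: eq_bigr => u _.
by rewrite mul1r.
Qed.

Lemma sum_group l (F : basis -> R) (U : seq basis) :
  uniq U -> {subset map fst l <= U} ->
  \sum_(t <- l) t.2 * F t.1 = \sum_(b <- U) coef l b * F b.
Proof.
move=> uU sub.
transitivity (\sum_(b <- U) \sum_(t <- l) (t.1 == b)%:R * (t.2 * F t.1)).
  rewrite exchange_big; apply: eq_big_seq => t tl /=.
  have tU : t.1 \in U by apply: sub; apply: map_f.
  rewrite (big_rem _ tU) /= eqxx mul1r big1_seq ?addr0 //.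
  move=> b /= bU; rewrite (mem_rem_uniq _ uU) inE in bU.
  case/andP: bU => nb _; rewrite eq_sym in nb.
  by rewrite (negbTE nb) mul0r.
apply: eq_bigr => b _; rewrite /coef big_distrl [RHS]big_mkcond /=.
apply: eq_bigr => t _; case: eqP => [->|_]; first by rewrite mul1r.
by rewrite mul0r.
Qed.

Lemma kc_notin l c : c \notin map fst l -> coef l c = 0.
Proof.
move=> h; rewrite /coef big1_seq // => t /andP [/eqP e tl].
by case/negP: h; rewrite -e; apply: map_f.
Qed.

Lemma sum_supp2 l (F : basis -> R) b1 b2 : b1 != b2 ->
  (forall b, coef l b != 0 -> b = b1 \/ b = b2) ->
  \sum_(t <- l) t.2 * F t.1 = coef l b1 * F b1 + coef l b2 * F b2.
Proof.
move=> ne sup.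
set V := [seq b <- undup (map fst l) | (b != b1) && (b != b2)].
rewrite (@sum_group l F (b1 :: b2 :: V)).
- rewrite !big_cons big1_seq ?addr0 ?addrA // => b /= bV.
  rewrite mem_filter in bV; case/andP: bV => /andP [nb1 nb2] _.
  case: (eqVneq (coef l b) 0) => [->|nz]; first by rewrite mul0r.
  by case: (sup _ nz) => e; [case/eqP: nb1 | case/eqP: nb2].
- rewrite /= !inE negb_or ne /= filter_uniq ?undup_uniq // andbT.
  rewrite /= /V !mem_filter !eqxx /= ?andbF //. 
- move=> b bl; rewrite !inE.
  case: (eqVneq b b1) => //= nb1; case: (eqVneq b b2) => //= nb2.
  by rewrite mem_filter nb1 nb2 mem_undup.
Qed.

Lemma kc_supp2 l b1 b2 c : b1 != b2 ->
  (forall b, coef l b != 0 -> b = b1 \/ b = b2) ->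
  coef l c = coef l b1 * (b1 == c)%:R + coef l b2 * (b2 == c)%:R.
Proof.
move=> ne sup; rewrite -(@sum_supp2 l (fun b => (b == c)%:R) b1 b2 ne sup).
rewrite /coef big_mkcond; apply: eq_bigr => t _.
by case: eqP; rewrite ?mulr1 ?mulr0.
Qed.
End Aux.

Definition sup1 (k : int) (x : basis) : basis :=
  match x with BL m | BI m => BL (k + m) | BG r | BH r => BG (k + r) end.
Definition sup2 (k : int) (x : basis) : basis :=
  match x with BL m | BI m => BI (k + m) | BG r | BH r => BH (k + r) end.

Lemma sup12 k x : sup1 k x != sup2 k x.
Proof. by case: x. Qed.

Lemma use_eq (K : comRingType) (L M P Q c : K) : L = M -> P - Q = c * (L - M) -> P = Q.
Proof. by move=> -> h; apply/eqP; rewrite -subr_eq0 h subrr mulr0. Qed.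

Section Main.
Variables (R : numFieldType) (lam : R) (k : int) (d : basis -> elt R).
Hypothesis k0 : k != 0.
Hypothesis D : even_superder_deg lam k d.

Lemma kR : (k%:~R : R) != 0.
Proof. by rewrite intr_eq0. Qed.

Lemma supp x b : coef (d x) b != 0 -> b = sup1 k x \/ b = sup2 k x.
Proof.
case: D => hp hi _ nz; have := hp _ _ nz; have := hi _ _ nz.
case: x nz => m nz; case: b nz => n nz //= e _; rewrite /sup1 /sup2.
all: first [left; congr BL; lia | right; congr BI; lia | left; congr BG; lia | right; congr BH; lia].
Qed.

Definition al := coef (d (BL 0)) (BL k).
Definition be := coef (d (BL 0)) (BI k).

Lemma key x c : coef (ext d (br lam (BL 0) x)) c =
  al * coef (br lam (BL k) x) c + be * coef (br lam (BI k) x) c +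
  coef (d x) (sup1 k x) * coef (br lam (BL 0) (sup1 k x)) c +
  coef (d x) (sup2 k x) * coef (br lam (BL 0) (sup2 k x)) c.
Proof.
case: D => _ _ hd; rewrite hd kc_cat kc_brE_bas_r kc_brE_bas_l.
rewrite (@sum_supp2 _ _ (fun b => coef (br lam b x) c) _ _ (sup12 k (BL 0)) (@supp (BL 0))).
rewrite (@sum_supp2 _ _ (fun b => coef (br lam (BL 0) b) c) _ _ (sup12 k x) (@supp x)).
by rewrite /= addr0 /al /be !addrA.
Qed.

Lemma decomp x c : coef (d x) c =
  coef (d x) (sup1 k x) * (sup1 k x == c)%:R + coef (d x) (sup2 k x) * (sup2 k x == c)%:R.
Proof. exact: kc_supp2 (sup12 k x) (@supp x). Qed.

Lemma use_eq2 (L1 M1 L2 M2 P Q c1 c2 : R) : L1 = M1 -> L2 = M2 ->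
  P - Q = c1 * (L1 - M1) + c2 * (L2 - M2) -> P = Q.
Proof. by move=> -> -> h; apply/eqP; rewrite -subr_eq0 h !subrr !mulr0 addr0. Qed.

Ltac fin := field; rewrite ?mulf_neq0 ?expf_neq0 ?kR //.

Ltac solve_case c E1 E2 s1 s2 :=
  rewrite decomp /= !kc_cons !kc_nil; try unfold Defs.half;
  case: (eqVneq s1 c) => [e|n1];
  [ subst c; rewrite /= ?eqxx /=; apply: (@use_eq2 _ _ _ _ _ _ (k%:~R)^-1 0 E1 E2); fin | ];
  case: (eqVneq s2 c) => [e|n2];
  [ subst c; rewrite /= ?eqxx /=;
    first [ apply: (@use_eq2 _ _ _ _ _ _ 0 (k%:~R)^-1 E1 E2); fin
          | apply: (@use_eq2 _ _ _ _ _ _ (lam / (k%:~R ^+ 2)) (k%:~R)^-1 E1 E2); fin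
          | apply: (@use_eq2 _ _ _ _ _ _ (- lam / (k%:~R ^+ 2)) (k%:~R)^-1 E1 E2); fin ] | ];
  rewrite /=; fin.

Lemma caseL m c : coef (d (BL m)) c = al / k%:~R * coef (br lam (BL k) (BL m)) c + be / k%:~R * coef (br lam (BI k) (BL m)) c.
Proof.
have E1 := key (BL m) (BL (k + m)).
have E2 := key (BL m) (BI (k + m)).
rewrite /= !kc_ext !big_cons !big_nil /= !add0r in E1 E2.
rewrite !kc_cons !kc_nil /= !eqxx in E1 E2.
solve_case c E1 E2 (BL (k + m)) (BI (k + m)).
Qed.

Lemma caseI m c : coef (d (BI m)) c = al / k%:~R * coef (br lam (BL k) (BI m)) c + be / k%:~R * coef (br lam (BI k) (BI m)) c.
Proof.
have E1 := key (BI m) (BL (k + m)).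
have E2 := key (BI m) (BI (k + m)).
rewrite /= !kc_ext !big_cons !big_nil /= !add0r in E1 E2.
rewrite !kc_cons !kc_nil /= !eqxx in E1 E2.
solve_case c E1 E2 (BL (k + m)) (BI (k + m)).
Qed.

Lemma caseH r c : coef (d (BH r)) c = al / k%:~R * coef (br lam (BL k) (BH r)) c + be / k%:~R * coef (br lam (BI k) (BH r)) c.
Proof.
have E1 := key (BH r) (BG (k + r)).
have E2 := key (BH r) (BH (k + r)).
rewrite /= !kc_ext !big_cons !big_nil /= !add0r in E1 E2.
rewrite !kc_cons !kc_nil /= !eqxx in E1 E2.
rewrite /Defs.half in E1 E2 *.
solve_case c E1 E2 (BG (k + r)) (BH (k + r)).
Qed.

Lemma caseG r c : coef (d (BG r)) c = al / k%:~R * coef (br lam (BL k) (BG r)) c + be / k%:~R * coef (br lam (BI k) (BG r)) c.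
Proof.
have E1 := key (BG r) (BG (k + r)).
have E2 := key (BG r) (BH (k + r)).
rewrite /= !kc_ext !big_cons !big_nil /= !add0r in E1 E2.
rewrite !caseH in E1 E2.
rewrite /= !kc_cons !kc_nil /= !eqxx in E1 E2.
rewrite /Defs.half in E1 E2 *.
solve_case c E1 E2 (BG (k + r)) (BH (k + r)).
Qed.

End Main.

Theorem lemma2p6 (R : numClosedFieldType) (lam : R) (k : int) (d : basis -> elt R) :
  k != 0 -> even_superder_deg lam k d ->
  exists a b : R, forall x : basis,
    coef (d x) =1 coef (brE lam [:: (BL k, a); (BI k, b)] (bas R x)).
Proof.
move=> k0 D; exists (al R k d / k%:~R), (be R k d / k%:~R) => x c.
rewrite kc_brE_bas_r !big_cons big_nil addr0.
case: x => m; [exact: (@caseL _ lam k d k0 D m c) | exact: (@caseI _ lam k d k0 D m c) | exact: (@caseG _ lam k d k0 D m c) | exact: (@caseH _ lam k d k0 D m c)].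
Qed.
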